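(* Let $G$ be a connected unicyclic graph with largest vertex degree $\Delta=3$ and let $\alpha\in(0,1)$. If $k(G)=3$ and $\alpha>\frac{-\gamma_0}{2-\gamma_0}$, or if $k(G)=2$ and $\alpha>\frac{-\delta_0}{2-\delta_0}$, then \[ \rho(A_\alpha(G))<3\alpha+2(1-\alpha)\sqrt{2}\cos\frac{\pi}{2k(G)+1}. \]
   Context: $A_\alpha(G)=\alpha D(G)+(1-\alpha)A(G)$ ($D$ degree matrix, $A$ adjacency matrix), and $\rho(M)$ is the spectral radius (largest eigenvalue) of a symmetric matrix $M$. A unicyclic graph is a connected graph with exactly one cycle; if $C_r$ is its cycle with vertices $v_1,\dots,v_r$, removing the cycle edges leaves trees $T_1,\dots,T_r$ rooted at $v_1,\dots,v_r$, $h(T_i)$ is the largest distance from $v_i$ to a vertex of $T_i$, and $k(G)=\max_i h(T_i)+1$. Let $Z(\gamma)=\begin{pmatrix}\gamma&\sqrt2&0\\ \sqrt2&0&1\\ 0&1&2\end{pmatrix}$ and $W(\delta)=\begin{pmatrix}\delta&1\\1&2\end{pmatrix}$. $\gamma_0$ is the unique real number (it lies in $(-0.25,-0.2)$) with $\rho(Z(\gamma_0))=2\sqrt2\cos\frac{\pi}{7}$, and $\delta_0$ is the unique real number (it lies in $(-1.2,-1.1)$) with $\rho(W(\delta_0))=2\sqrt2\cos\frac{\pi}{5}$. *)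

(* Defs.v *)
From Stdlib Require Import Reals List Arith Lia Lra.
Import ListNotations.
Open Scope bool_scope.
Open Scope R_scope.

Definition simple_graph (n : nat) (adj : nat -> nat -> bool) : Prop :=
  (forall i j, adj i j = adj j i) /\
  (forall i, adj i i = false) /\
  (forall i j, adj i j = true -> (i < n)%nat /\ (j < n)%nat).

Definition degree (n : nat) (adj : nat -> nat -> bool) (i : nat) : nat :=
  length (filter (adj i) (seq 0 n)).

Definition max_degree (n : nat) (adj : nat -> nat -> bool) (D : nat) : Prop :=
  (forall i, (i < n)%nat -> (degree n adj i <= D)%nat) /\
  (exists i, (i < n)%nat /\ degree n adj i = D).

(** [is_walk adj x p]: x, p_1, ..., p_m is a walk (consecutive vertices adjacent);
    it ends at [last p x] and has length [length p]. *)
Fixpoint is_walk (adj : nat -> nat -> bool) (x : nat) (p : list nat) : bool :=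
  match p with
  | [] => true
  | y :: p' => adj x y && is_walk adj y p'
  end.

Definition connected (n : nat) (adj : nat -> nat -> bool) : Prop :=
  forall u v, (u < n)%nat -> (v < n)%nat ->
    exists p, is_walk adj u p = true /\ last p u = v.

Definition is_cycle (adj : nat -> nat -> bool) (c : list nat) : Prop :=
  (3 <= length c)%nat /\ NoDup c /\
  exists v rest, c = v :: rest /\ is_walk adj v rest = true /\ adj (last rest v) v = true.

Definition cyc_edgeb (c : list nat) (x y : nat) : bool :=
  existsb (fun i =>
      orb (Nat.eqb (nth i c 0%nat) x && Nat.eqb (nth ((i + 1) mod length c) c 0%nat) y)
   (Nat.eqb (nth i c 0%nat) y && Nat.eqb (nth ((i + 1) mod length c) c 0%nat) x))
    (seq 0 (length c)).

(** Unicyclic: connected with exactly one cycle (cycles = subgraphs, i.e. determined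
    by their edge sets). *)
Definition unicyclic (n : nat) (adj : nat -> nat -> bool) : Prop :=
  connected n adj /\
  exists c, is_cycle adj c /\
    forall c', is_cycle adj c' -> forall x y, cyc_edgeb c' x y = cyc_edgeb c x y.

(** Graph with the cycle edges removed: its component containing v_i is T_i. *)
Definition del_cycle (adj : nat -> nat -> bool) (c : list nat) : nat -> nat -> bool :=
  fun x y => adj x y && negb (cyc_edgeb c x y).

Definition dist (adj : nat -> nat -> bool) (u v d : nat) : Prop :=
  (exists p, is_walk adj u p = true /\ last p u = v /\ length p = d) /\
  (forall p, is_walk adj u p = true -> last p u = v -> (d <= length p)%nat).

(** k = max_i h(T_i) + 1, where h(T_i) = largest distance from v_i to a vertex of T_i
    (T_i = component of v_i in G minus the cycle edges). *)
Definition kG (adj : nat -> nat -> bool) (c : list nat) (k : nat) : Prop :=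
  (1 <= k)%nat /\
  (exists i u, In i c /\ dist (del_cycle adj c) i u (k - 1)) /\
  (forall i u d, In i c -> dist (del_cycle adj c) i u d -> (d <= k - 1)%nat).

Definition k_of (adj : nat -> nat -> bool) (k : nat) : Prop :=
  exists c, is_cycle adj c /\ kG adj c k.

Definition rsum (n : nat) (f : nat -> R) : R :=
  fold_right Rplus 0 (map f (seq 0 n)).

Definition is_eigenvalue (n : nat) (M : nat -> nat -> R) (l : R) : Prop :=
  exists x : nat -> R, (exists i, (i < n)%nat /\ x i <> 0) /\
    forall i, (i < n)%nat -> rsum n (fun j => M i j * x j) = l * x i.

Definition is_rho (n : nat) (M : nat -> nat -> R) (r : R) : Prop :=
  is_eigenvalue n M r /\ forall l, is_eigenvalue n M l -> l <= r.

Definition A_alpha (n : nat) (adj : nat -> nat -> bool) (alpha : R) : nat -> nat -> R :=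
  fun i j =>
    alpha * (if Nat.eqb i j then INR (degree n adj i) else 0)
    + (1 - alpha) * (if adj i j then 1 else 0).

Definition Zmat (g : R) : nat -> nat -> R :=
  fun i j =>
    match i, j with
    | O, O => g | O, S O => sqrt 2 | S O, O => sqrt 2
    | S O, S (S O) => 1 | S (S O), S O => 1 | S (S O), S (S O) => 2
    | _, _ => 0 end.

Definition Wmat (d : R) : nat -> nat -> R :=
  fun i j =>
    match i, j with
    | O, O => d | O, S O => 1 | S O, O => 1 | S O, S O => 2
    | _, _ => 0 end.

(* Main.v *)
Require Import Defs.
From Stdlib Require Import Reals List Arith Lia Lra Psatz Classical ClassicalEpsilon.
Import ListNotations.
Open Scope R_scope.

Lemma last_cons (p : list nat) x y : last (y :: p) x = last p y.
Proof.
  revert x y; induction p as [|a p IH]; intros x y; auto.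
  change (last (a :: p) x = last (a :: p) y). rewrite !IH. auto.
Qed.

Lemma walk_app g x p q : is_walk g x (p ++ q) = is_walk g x p && is_walk g (last p x) q.
Proof.
  revert x; induction p as [|y p IH]; intro x; simpl; auto.
  rewrite IH. destruct (g x y); simpl; auto.
  rewrite <- (last_cons p x y). auto.
Qed.

Lemma last_app' (p q : list nat) x : last (p ++ q) x = last q (last p x).
Proof.
  revert x; induction p as [|y p IH]; intro x; auto.
  rewrite <- app_comm_cons, !last_cons. auto.
Qed.

Lemma walk_mono (g1 g2 : nat -> nat -> bool) x p :
  (forall a b, g1 a b = true -> g2 a b = true) -> is_walk g1 x p = true -> is_walk g2 x p = true.
Proof.
  intro H; revert x; induction p as [|y p IH]; intros x Hw; simpl in *; auto.
  apply andb_prop in Hw as [H1 H2]. rewrite H, IH; auto.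
Qed.

Lemma walk_mono_v (g1 g2 : nat -> nat -> bool) (P : nat -> Prop) x p :
  (forall a b, g1 a b = true -> P b -> g2 a b = true) -> (forall z, In z p -> P z) ->
  is_walk g1 x p = true -> is_walk g2 x p = true.
Proof.
  intro H; revert x; induction p as [|y p IH]; intros x HP Hw; simpl in *; auto.
  apply andb_prop in Hw as [H1 H2]. rewrite H, IH; auto.
Qed.

Lemma walk_mono_v2 (g1 g2 : nat -> nat -> bool) (P : nat -> Prop) x p :
  (forall a b, g1 a b = true -> P a -> P b -> g2 a b = true) -> (forall z, In z (x::p) -> P z) ->
  is_walk g1 x p = true -> is_walk g2 x p = true.
Proof.
  intro H; revert x; induction p as [|y p IH]; intros x HP Hw; simpl in *; auto.
  apply andb_prop in Hw as [H1 H2]. rewrite H, IH; auto.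
Qed.

Lemma walk_and (g1 g2 : nat -> nat -> bool) x p :
  is_walk g1 x p = true -> is_walk g2 x p = true -> is_walk (fun a b => g1 a b && g2 a b) x p = true.
Proof.
  revert x; induction p as [|y p IH]; intros x H1 H2; simpl in *; auto.
  apply andb_prop in H1 as [H1 H1']. apply andb_prop in H2 as [H2 H2'].
  rewrite H1, H2, IH; auto.
Qed.

Lemma walk_rev (g : nat -> nat -> bool) x p :
  (forall a b, g a b = g b a) -> is_walk g x p = true ->
  exists q, is_walk g (last p x) q = true /\ last q (last p x) = x /\ length q = length p /\
    (forall z, In z (last p x :: q) -> In z (x :: p)).
Proof.
  intro Hs; revert x; induction p as [|y p IH]; intros x Hw.
  - exists []; simpl; repeat split; auto.
  - simpl in Hw; apply andb_prop in Hw as [H1 H2].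
    destruct (IH y H2) as [q [Hq1 [Hq2 [Hq3 Hq4]]]].
    assert (E: last (y :: p) x = last p y) by apply last_cons.
    rewrite E. exists (q ++ [x]). repeat split.
    + rewrite walk_app, Hq1, Hq2; simpl. rewrite Hs, H1; auto.
    + rewrite last_last; auto.
    + rewrite length_app; simpl; lia.
    + intros z Hz. destruct Hz as [Hz|Hz].
      * right. apply Hq4; left; auto.
      * apply in_app_or in Hz as [Hz|Hz].
        -- right; apply Hq4; right; auto.
        -- destruct Hz as [<-|[]]; left; auto.
Qed.

Lemma walk_split g x p z : In z (x :: p) -> is_walk g x p = true ->
  exists p1 p2, p = p1 ++ p2 /\ last p1 x = z /\ is_walk g x p1 = true /\ is_walk g z p2 = true.
Proof.
  intros Hin Hw. destruct Hin as [<-|Hin].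
  - exists [], p; simpl; auto.
  - apply in_split in Hin as [l1 [l2 ->]].
    exists (l1 ++ [z]), l2. rewrite <- app_assoc. simpl. rewrite last_last.
    repeat split; auto.
    + replace (l1 ++ z :: l2) with ((l1 ++ [z]) ++ l2) in Hw by (rewrite <- app_assoc; auto).
      rewrite walk_app in Hw. apply andb_prop in Hw; tauto.
    + replace (l1 ++ z :: l2) with ((l1 ++ [z]) ++ l2) in Hw by (rewrite <- app_assoc; auto).
      rewrite walk_app in Hw. apply andb_prop in Hw as [_ Hw]. rewrite last_last in Hw; auto.
Qed.

Lemma walk_simple g x p : is_walk g x p = true ->
  exists q, is_walk g x q = true /\ last q x = last p x /\ NoDup (x :: q) /\ (length q <= length p)%nat.
Proof.
  revert x; induction p as [|y p IH]; intros x Hw.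
  - exists []; simpl; repeat split; auto. constructor; auto; constructor.
  - simpl in Hw; apply andb_prop in Hw as [H1 H2].
    destruct (IH y H2) as [q [Hq1 [Hq2 [Hq3 Hq4]]]].
    assert (E: last (y :: p) x = last p y) by apply last_cons.
    rewrite E.
    destruct (in_dec Nat.eq_dec x (y :: q)) as [Hin|Hin].
    + apply in_split in Hin as [l1 [l2 Hl]].
      exists l2. 
      assert (Hw: is_walk g y q = true) by auto.
      destruct l1 as [|a l1].
      * simpl in Hl. inversion Hl; subst. repeat split; auto. simpl; lia.
      * simpl in Hl. inversion Hl; subst.
        replace (l1 ++ x :: l2) with ((l1 ++ [x]) ++ l2) in * by (rewrite <- app_assoc; auto).
        rewrite walk_app, last_last in Hw. apply andb_prop in Hw as [_ Hw].
        rewrite last_app', last_last in Hq2.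
        repeat split; auto.
        -- apply NoDup_cons_iff in Hq3 as [_ Hq3]. rewrite <- app_assoc in Hq3.
           apply NoDup_app_remove_l in Hq3. auto.
        -- rewrite length_app in Hq4. simpl. lia.
    + exists (y :: q). simpl. rewrite H1, Hq1. repeat split; auto.
      * rewrite <- Hq2, <- (last_cons q x y); auto.
      * constructor; auto.
      * simpl; lia.
Qed.

Definition lsum (l : list nat) (f : nat -> R) : R := fold_right Rplus 0 (map f l).

Lemma lsum_cons b l f : lsum (b :: l) f = f b + lsum l f.
Proof. reflexivity. Qed.
Lemma lsum_nil f : lsum [] f = 0.
Proof. reflexivity. Qed.

Lemma lsum_le l f g : (forall x, In x l -> f x <= g x) -> lsum l f <= lsum l g.
Proof.
  induction l as [|a l IH]; intro H; unfold lsum in *; simpl; [lra|].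
  apply Rplus_le_compat; [apply H; left; auto| apply IH; intros; apply H; right; auto].
Qed.

Lemma lsum_abs l f : Rabs (lsum l f) <= lsum l (fun x => Rabs (f x)).
Proof.
  induction l as [|a l IH]; unfold lsum in *; simpl.
  - rewrite Rabs_R0; lra.
  - eapply Rle_trans; [apply Rabs_triang|]. lra.
Qed.

Lemma lsum_scal l f a : lsum l (fun x => a * f x) = a * lsum l f.
Proof. induction l as [|b l IH]; unfold lsum in *; simpl; [ring|]. rewrite IH; ring. Qed.

Lemma lsum_plus l f g : lsum l (fun x => f x + g x) = lsum l f + lsum l g.
Proof. induction l as [|b l IH]; unfold lsum in *; simpl; [ring|]. rewrite IH; ring. Qed.

Lemma lsum_filter l (p : nat -> bool) f :
  lsum l (fun x => (if p x then 1 else 0) * f x) = lsum (filter p l) f.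
Proof. induction l as [|b l IH]; unfold lsum in *; simpl; [ring|]. destruct (p b); simpl; rewrite IH; ring. Qed.

Lemma lsum_delta0 l v a : ~ In v l -> lsum l (fun x => (if Nat.eqb v x then a else 0)) = 0.
Proof.
  induction l as [|b l IH]; intro H; rewrite ?lsum_nil, ?lsum_cons; [ring|].
  destruct (Nat.eqb_spec v b); [subst; exfalso; apply H; left; auto|].
  rewrite IH; [ring|]. intro; apply H; right; auto.
Qed.

Lemma lsum_delta l v a : NoDup l -> In v l -> lsum l (fun x => (if Nat.eqb v x then a else 0)) = a.
Proof.
  induction l as [|b l IH]; intros Hn H; rewrite ?lsum_nil, ?lsum_cons; [destruct H|].
  inversion Hn; subst.
  destruct (Nat.eqb_spec v b).
  - subst. rewrite lsum_delta0; auto; ring.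
  - rewrite IH; auto; [ring|]. destruct H; auto. congruence.
Qed.

Lemma argmax (g : nat -> R) n : (0 < n)%nat -> exists i, (i < n)%nat /\ forall j, (j < n)%nat -> g j <= g i.
Proof.
  induction n as [|n IH]; intro Hn; [lia|].
  destruct n as [|n].
  - exists 0%nat; split; [lia|]. intros j Hj. assert (j = 0)%nat by lia; subst; lra.
  - destruct IH as [i [Hi Hm]]; [lia|].
    destruct (Rle_dec (g (S n)) (g i)).
    + exists i; split; [lia|]. intros j Hj. destruct (Nat.eq_dec j (S n)); [subst; auto|]. apply Hm; lia.
    + exists (S n); split; [lia|]. intros j Hj. destruct (Nat.eq_dec j (S n)); [subst; lra|].
      specialize (Hm j ltac:(lia)). lra.
Qed.

Lemma eig_bound n (M : nat -> nat -> R) (y : nat -> R) B l :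
  (forall i j, (i < n)%nat -> (j < n)%nat -> 0 <= M i j) ->
  (forall i, (i < n)%nat -> 0 < y i) ->
  (forall i, (i < n)%nat -> rsum n (fun j => M i j * y j) < B * y i) ->
  is_eigenvalue n M l -> l < B.
Proof.
  intros HM Hy HB [x [[i0 [Hi0 Hx0]] Hx]].
  destruct (argmax (fun j => Rabs (x j) / y j) n ltac:(lia)) as [i [Hi Hm]].
  set (t := Rabs (x i) / y i).
  assert (Hyi := Hy i Hi).
  assert (Ht0 : 0 < t).
  { specialize (Hm i0 Hi0). assert (0 < Rabs (x i0) / y i0).
    { apply Rdiv_lt_0_compat; [apply Rabs_pos_lt; auto| apply Hy; auto]. } unfold t; lra. }
  assert (Hxj : forall j, (j < n)%nat -> Rabs (x j) <= t * y j).
  { intros j Hj. specialize (Hm j Hj). assert (Hyj := Hy j Hj).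
    fold t in Hm. unfold Rdiv in Hm.
    apply (Rmult_le_compat_r (y j)) in Hm; [|lra].
    rewrite Rmult_assoc, Rinv_l in Hm; lra. }
  assert (Hxi : Rabs (x i) = t * y i).
  { unfold t; field; lra. }
  assert (H1 : Rabs l * Rabs (x i) <= t * rsum n (fun j => M i j * y j)).
  { rewrite <- Rabs_mult, <- Hx; auto. unfold rsum. fold (lsum (seq 0 n) (fun j => M i j * x j)).
    fold (lsum (seq 0 n) (fun j => M i j * y j)).
    eapply Rle_trans; [apply lsum_abs|]. rewrite <- lsum_scal. apply lsum_le.
    intros j Hj. apply in_seq in Hj. rewrite Rabs_mult, Rabs_pos_eq; [|apply HM; lia].
    specialize (Hxj j ltac:(lia)). specialize (HM i j Hi ltac:(lia)).
    apply (Rmult_le_compat_l (M i j)) in Hxj; auto. lra. }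
  specialize (HB i Hi).
  apply (Rmult_lt_compat_l t) in HB; auto.
  rewrite Hxi in H1.
  assert (Rabs l * (t * y i) < B * (t * y i)) by lra.
  apply Rmult_lt_reg_r in H; [|apply Rmult_lt_0_compat; auto].
  pose proof (Rle_abs l). lra.
Qed.

Close Scope R_scope.

Lemma existsb_ext' (f g : nat -> bool) l : (forall x, f x = g x) -> existsb f l = existsb g l.
Proof. intro H; induction l; simpl; auto. rewrite H, IHl; auto. Qed.

Lemma cyc_edgeb_sym c x y : cyc_edgeb c x y = cyc_edgeb c y x.
Proof.
  unfold cyc_edgeb. apply existsb_ext'. intros i. apply Bool.orb_comm.
Qed.

Lemma cyc_edgeb_spec c x y : cyc_edgeb c x y = true <->
  exists i, (i < length c)%nat /\
   ((nth i c 0%nat = x /\ nth ((i + 1) mod length c) c 0%nat = y) \/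
    (nth i c 0%nat = y /\ nth ((i + 1) mod length c) c 0%nat = x)).
Proof.
  unfold cyc_edgeb. rewrite existsb_exists. split.
  - intros [i [Hi H]]. apply in_seq in Hi. exists i; split; [lia|].
    apply Bool.orb_true_iff in H as [H|H]; apply andb_prop in H as [H1 H2];
      apply Nat.eqb_eq in H1; apply Nat.eqb_eq in H2; auto.
  - intros [i [Hi H]]. exists i; split; [apply in_seq; lia|].
    apply Bool.orb_true_iff. destruct H as [[H1 H2]|[H1 H2]]; [left|right];
      rewrite H1, H2, !Nat.eqb_refl; auto.
Qed.

Lemma cyc_edge_in c x y : cyc_edgeb c x y = true -> In x c /\ In y c.
Proof.
  intro H. apply cyc_edgeb_spec in H as [i [Hi H]].
  assert (Hm : ((i + 1) mod length c < length c)%nat) by (apply Nat.mod_upper_bound; lia).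
  destruct H as [[H1 H2]|[H1 H2]]; subst; split; apply nth_In; auto.
Qed.

Lemma cyc_consec c l1 x y l2 : c = l1 ++ x :: y :: l2 -> cyc_edgeb c x y = true.
Proof.
  intro Hc. apply cyc_edgeb_spec. exists (length l1).
  assert (HL : length c = (length l1 + S (S (length l2)))%nat) by (subst; rewrite length_app; auto).
  split; [lia|]. left. split.
  - subst; apply nth_middle.
  - rewrite Nat.mod_small by lia.
    replace c with ((l1 ++ [x]) ++ y :: l2) by (subst; rewrite <- app_assoc; auto).
    replace (length l1 + 1)%nat with (length (l1 ++ [x])) by (rewrite length_app; simpl; lia).
    apply nth_middle.
Qed.

Lemma cyc_close v0 r z : cyc_edgeb ((v0 :: r) ++ [z]) z v0 = true.
Proof.
  apply cyc_edgeb_spec. exists (length (v0 :: r)).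
  assert (HL : length ((v0::r)++[z]) = S (length (v0::r))) by (rewrite length_app; simpl; lia).
  rewrite HL. split; [lia|]. left. split; [apply nth_middle|].
  replace (length (v0::r) + 1)%nat with (S (length (v0::r))) by lia.
  rewrite Nat.Div0.mod_same. reflexivity.
Qed.

Lemma walk_consec (g : nat -> nat -> bool) x0 p :
  (forall l1 a b l2, x0 :: p = l1 ++ a :: b :: l2 -> g a b = true) -> is_walk g x0 p = true.
Proof.
  revert x0; induction p as [|y p IH]; intros x0 H; simpl; auto.
  rewrite (H [] x0 y p eq_refl). simpl. apply IH.
  intros l1 a b l2 E. apply (H (x0 :: l1) a b l2). rewrite E; auto.
Qed.

Definition Gm (adj : nat -> nat -> bool) (a b : nat) : nat -> nat -> bool :=
  fun x y => adj x y && negb ((Nat.eqb x a && Nat.eqb y b) || (Nat.eqb x b && Nat.eqb y a)).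

Definition uniq_cyc (adj : nat -> nat -> bool) (c : list nat) : Prop :=
  forall c', is_cycle adj c' -> forall x y, cyc_edgeb c' x y = cyc_edgeb c x y.

Lemma bridge adj c a b :
  (forall i j, adj i j = adj j i) -> (forall i, adj i i = false) ->
  uniq_cyc adj c -> adj a b = true -> cyc_edgeb c a b = false ->
  forall p, is_walk (Gm adj a b) a p = true -> last p a <> b.
Proof.
  intros Hs Hirr U Hab Hc p Hp Hl.
  destruct (walk_simple _ _ _ Hp) as [q [Hq1 [Hq2 [Hq3 _]]]].
  rewrite Hl in Hq2; clear Hl Hp.
  destruct q as [|b1 q].
  { simpl in Hq2. subst. rewrite Hirr in Hab; discriminate. }
  destruct q as [|b2 q].
  { simpl in Hq2. subst. simpl in Hq1. unfold Gm in Hq1.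
    rewrite Hab, !Nat.eqb_refl in Hq1. simpl in Hq1. discriminate. }
  assert (Hcyc : is_cycle adj (a :: b1 :: b2 :: q)).
  { split; [simpl; lia|]. split; auto.
    exists a, (b1 :: b2 :: q). split; auto. split.
    - eapply walk_mono; [|exact Hq1]. unfold Gm. intros x y H. apply andb_prop in H; tauto.
    - rewrite Hq2, Hs; auto. }
  assert (Hne : b1 :: b2 :: q <> []) by discriminate.
  destruct (exists_last Hne) as [r [z Hr]].
  rewrite Hr in Hq2. rewrite last_last in Hq2. subst z.
  assert (H1 : cyc_edgeb (a :: b1 :: b2 :: q) b a = true).
  { rewrite Hr. apply (cyc_close a r b). }
  rewrite (U _ Hcyc), cyc_edgeb_sym in H1. congruence.
Qed.

Lemma cyc_walk (g : nat -> nat -> bool) v0 rest x y :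
  is_walk g v0 rest = true -> g (last rest v0) v0 = true ->
  In x (v0 :: rest) -> In y (v0 :: rest) ->
  exists p, is_walk g x p = true /\ last p x = y /\ (forall z, In z p -> In z (v0 :: rest)).
Proof.
  intros Hw Hc Hx Hy.
  assert (H1 : exists p, is_walk g x p = true /\ last p x = v0 /\ (forall z, In z p -> In z (v0 :: rest))).
  { destruct Hx as [<-|Hx]. { exists []; simpl; repeat split; auto. intros z []. }
    apply in_split in Hx as [l1 [l2 E]].
    exists (l2 ++ [v0]). subst rest.
    replace (l1 ++ x :: l2) with ((l1 ++ [x]) ++ l2) in * by (rewrite <- app_assoc; auto).
    rewrite walk_app, last_last in Hw. apply andb_prop in Hw as [_ Hw].
    rewrite last_app', last_last in Hc.
    repeat split.
    - rewrite walk_app, Hw; simpl. rewrite Hc; auto.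
    - apply last_last.
    - intros z Hz. apply in_app_or in Hz as [Hz|[<-|[]]]; [|left; auto].
      right. apply in_or_app; auto. }
  assert (H2 : exists p, is_walk g v0 p = true /\ last p v0 = y /\ (forall z, In z p -> In z (v0 :: rest))).
  { destruct (walk_split g v0 rest y Hy Hw) as [p1 [p2 [E [Hl [Hw1 _]]]]].
    exists p1; repeat split; auto. intros z Hz; right; rewrite E; apply in_or_app; auto. }
  destruct H1 as [p [Hp1 [Hp2 Hp3]]]. destruct H2 as [q [Hq1 [Hq2 Hq3]]].
  exists (p ++ q). repeat split.
  - rewrite walk_app, Hp1, Hp2; auto.
  - rewrite last_app', Hp2; auto.
  - intros z Hz; apply in_app_or in Hz as [Hz|Hz]; auto.
Qed.

Lemma min_nat (P : nat -> Prop) : (exists m, P m) -> exists m, P m /\ forall m', P m' -> (m <= m')%nat.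
Proof.
  intros [m0 H0]. induction m0 as [m0 IH] using (well_founded_induction lt_wf).
  destruct (classic (exists m', (m' < m0)%nat /\ P m')) as [[m' [Hm' Pm']]|Hn].
  - apply (IH m'); auto.
  - exists m0; split; auto. intros m' Pm'. destruct (Nat.lt_ge_cases m' m0); auto.
    exfalso; apply Hn; eauto.
Qed.

Definition Rr adj c v m := exists i p, In i c /\ is_walk (del_cycle adj c) i p = true /\ last p i = v /\ length p = m.

Lemma hex adj c v : exists m, ((exists m, Rr adj c v m) -> Rr adj c v m /\ forall m', Rr adj c v m' -> (m <= m')%nat).
Proof.
  destruct (classic (exists m, Rr adj c v m)) as [H|H].
  - destruct (min_nat _ H) as [m Hm]. exists m; auto.
  - exists 0%nat. intro; contradiction.
Qed.

Definition hdep adj c v : nat := proj1_sig (constructive_indefinite_description _ (hex adj c v)).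

Lemma hd_spec adj c v : (exists m, Rr adj c v m) -> Rr adj c v (hdep adj c v) /\ forall m', Rr adj c v m' -> (hdep adj c v <= m')%nat.
Proof. unfold hdep. destruct (constructive_indefinite_description _ _) as [m Hm]. simpl. auto. Qed.

Lemma del_sym adj c : (forall i j, adj i j = adj j i) -> forall x y, del_cycle adj c x y = del_cycle adj c y x.
Proof. intros Hs x y. unfold del_cycle. rewrite Hs, cyc_edgeb_sym; auto. Qed.

Lemma del_sub adj c x y : del_cycle adj c x y = true -> adj x y = true.
Proof. unfold del_cycle. intro H. apply andb_prop in H; tauto. Qed.

Lemma del_notc adj c x y : adj x y = true -> ~ In y c -> del_cycle adj c x y = true.
Proof.
  intros H Hy. unfold del_cycle. rewrite H. destruct (cyc_edgeb c x y) eqn:E; auto.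
  apply cyc_edge_in in E. tauto.
Qed.

Lemma del_notc' adj c x y : adj x y = true -> ~ In x c -> del_cycle adj c x y = true.
Proof.
  intros H Hy. unfold del_cycle. rewrite H. destruct (cyc_edgeb c x y) eqn:E; auto.
  apply cyc_edge_in in E. tauto.
Qed.

Lemma walk_split2 g x p z : In z p -> is_walk g x p = true ->
  exists l1 l2, p = l1 ++ z :: l2 /\ is_walk g z l2 = true /\ last p x = last l2 z.
Proof.
  intros Hin Hw. apply in_split in Hin as [l1 [l2 ->]]. exists l1, l2. split; auto.
  replace (l1 ++ z :: l2) with ((l1 ++ [z]) ++ l2) in * by (rewrite <- app_assoc; auto).
  rewrite walk_app, last_last in Hw. apply andb_prop in Hw as [_ Hw]. split; auto.
  rewrite last_app', last_last; auto.
Qed.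

Lemma lastC (g : nat -> nat -> bool) c : forall N p x, (length p <= N)%nat -> In x c -> is_walk g x p = true ->
  exists i p2, In i c /\ is_walk g i p2 = true /\ last p2 i = last p x /\ (forall z, In z p2 -> ~ In z c).
Proof.
  induction N as [|N IH]; intros p x Hl Hx Hw.
  - destruct p; [|simpl in Hl; lia]. exists x, []; simpl; repeat split; auto.
  - destruct (classic (exists z, In z p /\ In z c)) as [[z [Hz Hzc]]|Hn].
    + destruct (walk_split2 g x p z Hz Hw) as [l1 [l2 [E [Hw2 Hl2]]]].
      rewrite Hl2. apply (IH l2 z); auto. rewrite E, length_app in Hl; simpl in Hl; lia.
    + exists x, p; repeat split; auto. intros z Hz Hzc; apply Hn; eauto.
Qed.

Lemma reach n adj c v : simple_graph n adj -> connected n adj -> is_cycle adj c -> (v < n)%nat ->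
  exists m, Rr adj c v m.
Proof.
  intros [Hs [Hirr Hb]] Hcon [Hlen [Hnd [v0 [rest [Ec [Hw Hcl]]]]]] Hv.
  destruct rest as [|b1 rest]; [subst; simpl in Hlen; lia|].
  simpl in Hw. apply andb_prop in Hw as [Hvb _].
  destruct (Hb _ _ Hvb) as [Hv0 _].
  destruct (Hcon v0 v Hv0 Hv) as [p [Hp Hl]].
  destruct (lastC adj c (length p) p v0 (le_n _)) as [i [p2 [Hi [Hw2 [Hl2 Hn2]]]]]; auto.
  { rewrite Ec; left; auto. }
  exists (length p2), i, p2. repeat split; auto.
  - eapply walk_mono_v with (P := fun z => ~ In z c); [|exact Hn2|exact Hw2].
    intros a b H1 H2. apply del_notc; auto.
  - congruence.
Qed.

Lemma hd0 adj c v : (exists m, Rr adj c v m) -> (hdep adj c v = 0%nat <-> In v c).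
Proof.
  intro Hr. destruct (hd_spec adj c v Hr) as [[i [p [Hi [Hw [Hl Hlen]]]]] Hm]. split.
  - intro H0. rewrite H0 in Hlen. destruct p; [|discriminate]. simpl in Hl; subst; auto.
  - intro Hv. specialize (Hm 0%nat). assert (Rr adj c v 0) by (exists v, []; simpl; auto). 
    specialize (Hm H). lia.
Qed.

Lemma hd_nb adj c u v : (exists m, Rr adj c u m) -> del_cycle adj c u v = true ->
  (exists m, Rr adj c v m) /\ (hdep adj c v <= hdep adj c u + 1)%nat.
Proof.
  intros Hr Huv. destruct (hd_spec adj c u Hr) as [[i [p [Hi [Hw [Hl Hlen]]]]] _].
  assert (Rr adj c v (hdep adj c u + 1)).
  { exists i, (p ++ [v]). repeat split; auto.
    - rewrite walk_app, Hw, Hl; simpl. rewrite Huv; auto.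
    - apply last_last.
    - rewrite length_app; simpl; lia. }
  split; [eauto|]. apply hd_spec; eauto.
Qed.

Lemma hd_k adj c k v : kG adj c k -> (exists m, Rr adj c v m) -> (hdep adj c v <= k - 1)%nat.
Proof.
  intros [_ [_ Hk]] Hr. destruct (hd_spec adj c v Hr) as [[i [p [Hi [Hw [Hl Hlen]]]]] Hm].
  destruct (min_nat (fun m => exists p, is_walk (del_cycle adj c) i p = true /\ last p i = v /\ length p = m))
    as [d [[q [Hq1 [Hq2 Hq3]]] Hd]]; eauto.
  assert (Hdist : Defs.dist (del_cycle adj c) i v d).
  { split; eauto. }
  specialize (Hk i v d Hi Hdist).
  assert (hdep adj c v <= d)%nat by (apply Hm; exists i, q; auto). lia.
Qed.

Lemma slow1 n adj c v : simple_graph n adj -> connected n adj -> is_cycle adj c -> uniq_cyc adj c ->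
  (v < n)%nat -> (1 <= hdep adj c v)%nat ->
  exists w, forall u, adj v u = true -> (hdep adj c u <= hdep adj c v)%nat -> u = w.
Proof.
  intros Hg Hcon Hcyc U Hv Hh.
  pose proof Hg as [Hs [Hirr Hb]].
  assert (Hrv := reach n adj c v Hg Hcon Hcyc Hv).
  assert (Hvc : ~ In v c) by (intro H; apply (hd0 adj c v Hrv) in H; lia).
  destruct (hd_spec adj c v Hrv) as [[i [p [Hi [Hw [Hl Hlen]]]]] Hm].
  destruct p as [|p0 p1] eqn:Ep; [simpl in Hlen; lia|].
  rewrite <- Ep in *.
  assert (Hne : p <> []) by (subst; discriminate).
  destruct (exists_last Hne) as [p' [v' Ep']]. clear Ep p0 p1.
  subst p. rewrite last_last in Hl. subst v'.
  rewrite walk_app in Hw. apply andb_prop in Hw as [Hw' Hwv]. simpl in Hwv.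
  rewrite Bool.andb_true_r in Hwv.
  rewrite length_app in Hlen; simpl in Hlen.
  set (w := last p' i) in *.
  exists w. intros u Hvu Hu.
  destruct (Nat.eq_dec u w) as [|Huw]; auto. exfalso.
  assert (Huv : u <> v) by (intro; subst; rewrite Hirr in Hvu; discriminate).
  assert (Hru : exists m, Rr adj c u m) by (apply (reach n adj c u); auto; apply (Hb v u Hvu)).
  destruct (hd_spec adj c u Hru) as [[j [q [Hj [Hq [Hlq Hlenq]]]]] _].
  assert (Hvq : ~ In v (j :: q)).
  { intro Hin. destruct (walk_split _ j q v Hin Hq) as [q1 [q2 [E [Hl1 [Hw1 _]]]]].
    assert (Hq2 : q2 <> []).
    { intro; subst q2. rewrite app_nil_r in E; subst q. congruence. }
    assert (Rr adj c v (length q1)) by (exists j, q1; auto).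
    apply Hm in H. subst q. rewrite length_app in Hlenq.
    destruct q2; [congruence|]. simpl in Hlenq. lia. }
  assert (Hvp : ~ In v (i :: p')).
  { intro Hin. destruct (walk_split _ i p' v Hin Hw') as [q1 [q2 [E [Hl1 [Hw1 _]]]]].
    assert (Rr adj c v (length q1)) by (exists i, q1; auto).
    apply Hm in H. subst p'. rewrite length_app in Hlen. lia. }
  destruct (walk_rev _ j q (del_sym adj c Hs) Hq) as [qr [Hqr1 [Hqr2 [_ Hqr4]]]].
  rewrite Hlq in Hqr1, Hqr2, Hqr4.
  destruct Hcyc as [_ [_ [v0 [rest [Ec [Hcw Hcc]]]]]].
  destruct (cyc_walk adj v0 rest j i Hcw Hcc) as [cw [Hcw1 [Hcw2 Hcw3]]]; try (rewrite <- Ec; auto).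
  rewrite <- Ec in Hcw3.
  set (P := u :: (qr ++ cw ++ p')).
  assert (HP : is_walk (Gm adj v w) v P = true).
  { unfold P. simpl. apply andb_true_intro. split.
    - unfold Gm. rewrite Hvu. rewrite Nat.eqb_refl.
      destruct (Nat.eqb_spec u w); [congruence|]. destruct (Nat.eqb_spec u v); [congruence|].
      rewrite !Bool.andb_false_r. auto.
    - apply walk_mono_v2 with (g1 := adj) (P := fun z => z <> v).
      + intros a b Hab Ha Hb'. unfold Gm. rewrite Hab.
        destruct (Nat.eqb_spec a v); [congruence|]. destruct (Nat.eqb_spec b v); [congruence|].
        rewrite Bool.andb_false_r. auto.
      + intros z Hz Hzv; subst z. destruct Hz as [Hz|Hz]; [congruence|].
        apply in_app_or in Hz as [Hz|Hz]; [apply Hvq, Hqr4; right; auto|].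
        apply in_app_or in Hz as [Hz|Hz]; [apply Hvc, Hcw3; auto|].
        apply Hvp; right; auto.
      + rewrite !walk_app. rewrite Hqr2, Hcw2, Hcw1.
        rewrite (walk_mono _ adj _ _ (del_sub adj c) Hqr1).
        rewrite (walk_mono _ adj _ _ (del_sub adj c) Hw'). auto. }
  assert (Hlast : last P v = w).
  { unfold P. rewrite last_cons, last_app', last_app', Hqr2, Hcw2. reflexivity. }
  assert (Hvw : adj v w = true) by (rewrite Hs; apply (del_sub adj c); auto).
  assert (Hcvw : cyc_edgeb c v w = false).
  { destruct (cyc_edgeb c v w) eqn:E; auto. apply cyc_edge_in in E. tauto. }
  exact (bridge adj c v w Hs Hirr U Hvw Hcvw P HP Hlast).
Qed.

Lemma slow0 n adj c v : simple_graph n adj -> is_cycle adj c -> uniq_cyc adj c -> In v c ->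
  exists a b, forall u, adj v u = true -> In u c -> u = a \/ u = b.
Proof.
  intros [Hs [Hirr Hb]] Hcyc U Hv.
  pose proof Hcyc as [Hlen [Hnd [v0 [rest [Ec [Hcw Hcc]]]]]].
  destruct (In_nth c v 0%nat Hv) as [iv [Hiv Hnv]].
  set (L := length c) in *.
  exists (nth ((iv + 1) mod L) c 0%nat), (if Nat.eqb iv 0 then nth (L - 1) c 0%nat else nth (iv - 1) c 0%nat).
  intros u Hvu Hu.
  destruct (cyc_edgeb c v u) eqn:Ecu.
  - apply cyc_edgeb_spec in Ecu as [i [Hi H]]. fold L in Hi, H.
    assert (Hm : ((i + 1) mod L < L)%nat) by (apply Nat.mod_upper_bound; lia).
    destruct H as [[H1 H2]|[H1 H2]].
    + left. assert (i = iv). { apply (NoDup_nth c 0%nat); auto; congruence. } subst; auto.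
    + right. assert (Hi2 : ((i + 1) mod L)%nat = iv). { apply (NoDup_nth c 0%nat); auto; congruence. }
      destruct (Nat.lt_ge_cases (i + 1) L).
      * rewrite Nat.mod_small in Hi2 by lia. subst iv.
        replace (Nat.eqb (i+1) 0) with false by (symmetry; apply Nat.eqb_neq; lia).
        replace (i + 1 - 1)%nat with i by lia. auto.
      * assert (HiL : (i + 1 = L)%nat) by lia. rewrite HiL, Nat.Div0.mod_same in Hi2. subst iv. simpl.
        replace (L - 1)%nat with i by lia. auto.
  - exfalso.
    set (g := fun x y => adj x y && cyc_edgeb c x y).
    assert (Hgw : is_walk g v0 rest = true).
    { apply walk_and; auto. apply walk_consec. intros l1 a b l2 E. apply (cyc_consec c l1 a b l2). congruence. }
    assert (Hgc : g (last rest v0) v0 = true).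
    { unfold g. rewrite Hcc. simpl.
      destruct rest as [|r1 rest]; [subst c; unfold L in *; simpl in *; lia|].
      assert (Hne : r1 :: rest <> []) by discriminate.
      destruct (exists_last Hne) as [r' [z Ez]]. rewrite Ez, last_last. rewrite Ec, Ez.
      apply (cyc_close v0 r' z). }
    rewrite Ec in Hv, Hu.
    destruct (cyc_walk g v0 rest v u Hgw Hgc Hv Hu) as [p [Hp1 [Hp2 _]]].
    assert (HP : is_walk (Gm adj v u) v p = true).
    { apply (walk_mono g); [|exact Hp1]. intros a b Hab. unfold g, Gm in *. apply andb_prop in Hab as [H1 H2].
      rewrite H1. simpl.
      destruct (Nat.eqb_spec a v) as [Eav|]; destruct (Nat.eqb_spec b u) as [Ebu|]; simpl;
        [rewrite Eav, Ebu in H2; congruence| | |];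
      destruct (Nat.eqb_spec a u) as [Eau|]; destruct (Nat.eqb_spec b v) as [Ebv|]; simpl; auto;
      rewrite Eau, Ebv, cyc_edgeb_sym in H2; congruence. }
    exact (bridge adj c v u Hs Hirr U Hvu Ecu p HP Hp2).
Qed.

Open Scope R_scope.

Lemma lsum_ext l f g : (forall x, In x l -> f x = g x) -> lsum l f = lsum l g.
Proof.
  induction l as [|a l IH]; intro H; rewrite ?lsum_nil, ?lsum_cons; auto.
  rewrite H, IH; auto; [intros; apply H; right; auto| left; auto].
Qed.

Lemma lsum_count l (g : nat -> R) (p : nat -> bool) a b :
  (forall u, In u l -> p u = true -> g u <= b) -> (forall u, In u l -> p u = false -> g u <= a) ->
  lsum l g <= INR (length l) * a + INR (length (filter p l)) * (b - a).
Proof.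
  induction l as [|x l IH]; intros H1 H2; rewrite ?lsum_nil, ?lsum_cons; [simpl; lra|].
  change (length (x :: l)) with (S (length l)).
  rewrite S_INR. cbn [filter]. destruct (p x) eqn:E;
  [change (length (x :: filter p l)) with (S (length (filter p l))); rewrite S_INR|];
  [pose proof (H1 x (or_introl eq_refl) E) as Hx|pose proof (H2 x (or_introl eq_refl) E) as Hx];
  (assert (IH' : lsum l g <= INR (length l) * a + INR (length (filter p l)) * (b - a))
    by (apply IH; intros; [apply H1|apply H2]; auto; right; auto)); lra.
Qed.

Lemma count_le l (p : nat -> bool) S : NoDup l -> (forall u, In u l -> p u = true -> In u S) ->
  (length (filter p l) <= length S)%nat.
Proof.
  intros Hn H. apply NoDup_incl_length; [apply NoDup_filter; auto|].
  intros u Hu. apply filter_In in Hu as [Hu Hp]. auto.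
Qed.

Lemma row_expand n adj alpha (y : nat -> R) v : (v < n)%nat ->
  rsum n (fun j => A_alpha n adj alpha v j * y j) =
  alpha * INR (degree n adj v) * y v + (1 - alpha) * lsum (filter (adj v) (seq 0 n)) y.
Proof.
  intro Hv. unfold rsum. fold (lsum (seq 0 n) (fun j => A_alpha n adj alpha v j * y j)).
  rewrite (lsum_ext _ _ (fun j => (if Nat.eqb v j then alpha * INR (degree n adj v) * y v else 0)
     + (1 - alpha) * ((if adj v j then 1 else 0) * y j))).
  - rewrite lsum_plus, lsum_scal, lsum_filter, lsum_delta; auto; [apply seq_NoDup|apply in_seq; lia].
  - intros j _. unfold A_alpha. destruct (Nat.eqb_spec v j); [subst|]; ring.
Qed.

Lemma filter_all (p : nat -> bool) l : (forall u, In u l -> p u = true) -> filter p l = l.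
Proof.
  induction l as [|x l IH]; intro H; simpl; auto.
  rewrite H by (left; auto). rewrite IH; auto. intros; apply H; right; auto.
Qed.

Lemma vertex_bound n adj c k alpha B (F : nat -> R) :
 simple_graph n adj -> connected n adj -> is_cycle adj c -> uniq_cyc adj c -> kG adj c k ->
 max_degree n adj 3 -> 0 < alpha < 1 -> (2 <= k)%nat ->
 (forall i j, (i <= j)%nat -> F j <= F i) -> (forall i, (i <= k-1)%nat -> 0 < F i) ->
 3*alpha*F 0%nat + (1-alpha)*(2*F 0%nat + F 1%nat) < B * F 0%nat ->
 (forall d, (1 <= d)%nat -> (d + 1 < k)%nat ->
    3*alpha*F d + (1-alpha)*(F (d-1)%nat + 2*F (d+1)%nat) < B * F d) ->
 alpha*F (k-1)%nat + (1-alpha)*F (k-2)%nat < B * F (k-1)%nat ->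
 forall v, (v < n)%nat ->
   rsum n (fun j => A_alpha n adj alpha v j * F (hdep adj c j)) < B * F (hdep adj c v).
Proof.
  intros Hg Hcon Hcyc U Hk Hmax Ha Hk2 Fdec Fpos P0 Pmid Plast v Hv.
  pose proof Hg as [Hs [Hirr Hb]].
  rewrite row_expand by auto.
  set (h := hdep adj c) in *.
  set (N := filter (adj v) (seq 0 n)).
  assert (HN : NoDup N) by (apply NoDup_filter, seq_NoDup).
  assert (HNu : forall u, In u N -> adj v u = true /\ (u < n)%nat).
  { intros u Hu. apply filter_In in Hu as [Hu Ha']. apply in_seq in Hu. split; auto; lia. }
  assert (Hdeg : (length N <= 3)%nat) by (apply Hmax; auto).
  replace (degree n adj v) with (length N) by reflexivity.
  assert (Hr : forall u, (u < n)%nat -> exists m, Rr adj c u m) by (intros; apply (reach n adj c); auto).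
  assert (HD : INR (length N) <= 3) by (replace 3 with (INR 3) by (simpl; lra); apply le_INR; auto).
  assert (HD0 : 0 <= INR (length N)) by apply pos_INR.
  assert (Hhk : forall u, (u < n)%nat -> (h u <= k - 1)%nat) by (intros; apply hd_k; auto).
  set (D := INR (length N)) in *.
  assert (Hb1 : 0 < 1 - alpha) by lra.
  destruct (Nat.eq_dec (h v) 0) as [H0|H0].
  - assert (Hvc : In v c) by (apply (hd0 adj c v (Hr v Hv)); auto).
    destruct (slow0 n adj c v Hg Hcyc U Hvc) as [a [b Hab]].
    set (p := fun u => Nat.eqb (h u) 0).
    assert (HS := lsum_count N (fun u => F (h u)) p (F 1%nat) (F 0%nat)).
    assert (HS' : lsum N (fun u => F (h u)) <= D * F 1%nat + INR (length (filter p N)) * (F 0%nat - F 1%nat)).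
    { apply HS.
      - intros u Hu Hp. unfold p in Hp. apply Nat.eqb_eq in Hp. rewrite Hp. lra.
      - intros u Hu Hp. unfold p in Hp. apply Nat.eqb_neq in Hp. apply Fdec. lia. }
    assert (Hc : (length (filter p N) <= 2)%nat).
    { apply (count_le N p [a; b]); auto. intros u Hu Hp. unfold p in Hp. apply Nat.eqb_eq in Hp.
      destruct (HNu u Hu) as [H1 H2].
      assert (In u c) by (apply (hd0 adj c u (Hr u H2)); auto).
      destruct (Hab u H1 H) as [->| ->]; simpl; auto. }
    assert (Hc' : INR (length (filter p N)) <= 2)
      by (replace 2 with (INR 2) by (simpl; lra); apply le_INR; auto).
    assert (Hc0 : 0 <= INR (length (filter p N))) by apply pos_INR.
    rewrite H0.
    assert (HF01 : F 1%nat <= F 0%nat) by (apply Fdec; lia).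
    assert (HF0 : 0 < F 0%nat) by (apply Fpos; lia).
    assert (HF1 : 0 < F 1%nat) by (apply Fpos; lia).
    set (C := INR (length (filter p N))) in *.
    assert (T1 : 0 <= (3 - D) * (alpha * F 0%nat + (1 - alpha) * F 1%nat)).
    { apply Rmult_le_pos; [lra|]. apply Rplus_le_le_0_compat; apply Rmult_le_pos; lra. }
    assert (T2 : 0 <= (2 - C) * ((1 - alpha) * (F 0%nat - F 1%nat))).
    { apply Rmult_le_pos; [lra|]. apply Rmult_le_pos; lra. }
    assert (T3 : (1 - alpha) * lsum N (fun u => F (h u)) <=
                 (1 - alpha) * (D * F 1%nat + C * (F 0%nat - F 1%nat))).
    { apply Rmult_le_compat_l; lra. }
    lra.
  - assert (Hvc : ~ In v c) by (intro H; apply (hd0 adj c v (Hr v Hv)) in H; auto).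
    destruct (slow1 n adj c v Hg Hcon Hcyc U Hv ltac:(unfold h in H0; lia)) as [w Hw].
    fold h in Hw.
    set (d := h v) in *.
    set (p := fun u => Nat.leb (h u) d).
    assert (Hnb : forall u, In u N -> (d <= h u + 1)%nat).
    { intros u Hu. destruct (HNu u Hu) as [H1 H2].
      apply (hd_nb adj c u v (Hr u H2)). apply del_notc; auto. rewrite Hs; auto. }
    assert (HS' : lsum N (fun u => F (h u)) <= D * F (d+1)%nat + INR (length (filter p N)) * (F (d-1)%nat - F (d+1)%nat)).
    { apply lsum_count.
      - intros u Hu Hp. apply Fdec. specialize (Hnb u Hu). lia.
      - intros u Hu Hp. unfold p in Hp. apply Nat.leb_gt in Hp. apply Fdec. lia. }
    assert (Hc : (length (filter p N) <= 1)%nat).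
    { apply (count_le N p [w]); auto. intros u Hu Hp. unfold p in Hp. apply Nat.leb_le in Hp.
      destruct (HNu u Hu) as [H1 H2]. rewrite (Hw u H1 Hp). left; auto. }
    assert (Hc' : INR (length (filter p N)) <= 1)
      by (replace 1 with (INR 1) by (simpl; lra); apply le_INR; auto).
    assert (Hc0 : 0 <= INR (length (filter p N))) by apply pos_INR.
    assert (Hdk : (d <= k - 1)%nat) by (apply Hhk; auto).
    assert (HFa : F (d+1)%nat <= F (d-1)%nat) by (apply Fdec; lia).
    assert (HFd : 0 < F d) by (apply Fpos; lia).
    assert (HFm : 0 < F (d-1)%nat) by (apply Fpos; lia).
    set (C := INR (length (filter p N))) in *.
    destruct (Nat.lt_ge_cases (d + 1) k) as [Hlt|Hge].
    + specialize (Pmid d ltac:(lia) Hlt).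
      assert (HF2 : 0 < F (d+1)%nat) by (apply Fpos; lia).
      assert (T1 : 0 <= (3 - D) * (alpha * F d + (1 - alpha) * F (d+1)%nat)).
      { apply Rmult_le_pos; [lra|]. apply Rplus_le_le_0_compat; apply Rmult_le_pos; lra. }
      assert (T2 : 0 <= (1 - C) * ((1 - alpha) * (F (d-1)%nat - F (d+1)%nat))).
      { apply Rmult_le_pos; [lra|]. apply Rmult_le_pos; lra. }
      assert (T3 : (1 - alpha) * lsum N (fun u => F (h u)) <=
                   (1 - alpha) * (D * F (d+1)%nat + C * (F (d-1)%nat - F (d+1)%nat))).
      { apply Rmult_le_compat_l; lra. }
      lra.
    + assert (Hd : d = (k - 1)%nat) by lia.
      assert (Hall : filter p N = N).
      { apply filter_all. intros u Hu. unfold p. apply Nat.leb_le.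
        destruct (HNu u Hu) as [_ H2]. specialize (Hhk u H2). lia. }
      assert (HCD : C = D) by (unfold C, D; rewrite Hall; auto).
      assert (Hd2 : (d - 1 = k - 2)%nat) by lia.
      rewrite Hd2 in *. rewrite Hd in *.
      assert (T1 : 0 <= (1 - D) * (alpha * F (k-1)%nat + (1 - alpha) * F (k-2)%nat)).
      { apply Rmult_le_pos; [lra|]. apply Rplus_le_le_0_compat; apply Rmult_le_pos; lra. }
      assert (T3 : (1 - alpha) * lsum N (fun u => F (h u)) <=
                   (1 - alpha) * (D * F (k-1+1)%nat + C * (F (k-2)%nat - F (k-1+1)%nat))).
      { apply Rmult_le_compat_l; lra. }
      rewrite HCD in T3. lra.
Qed.

Lemma graph_bound n adj c k alpha B (F : nat -> R) :
 simple_graph n adj -> connected n adj -> is_cycle adj c -> uniq_cyc adj c -> kG adj c k ->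
 max_degree n adj 3 -> 0 < alpha < 1 -> (2 <= k)%nat ->
 (forall i j, (i <= j)%nat -> F j <= F i) -> (forall i, (i <= k-1)%nat -> 0 < F i) ->
 3*alpha*F 0%nat + (1-alpha)*(2*F 0%nat + F 1%nat) < B * F 0%nat ->
 (forall d, (1 <= d)%nat -> (d + 1 < k)%nat ->
    3*alpha*F d + (1-alpha)*(F (d-1)%nat + 2*F (d+1)%nat) < B * F d) ->
 alpha*F (k-1)%nat + (1-alpha)*F (k-2)%nat < B * F (k-1)%nat ->
 forall r, is_eigenvalue n (A_alpha n adj alpha) r -> r < B.
Proof.
  intros Hg Hcon Hcyc U Hk Hmax Ha Hk2 Fdec Fpos P0 Pmid Plast r Hr.
  apply (eig_bound n (A_alpha n adj alpha) (fun j => F (hdep adj c j)) B r); auto.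
  - intros i j _ _. unfold A_alpha.
    assert (0 <= (if Nat.eqb i j then INR (degree n adj i) else 0)) by (destruct (Nat.eqb i j); [apply pos_INR|lra]).
    assert (0 <= (if adj i j then 1 else 0)) by (destruct (adj i j); lra).
    apply Rplus_le_le_0_compat; apply Rmult_le_pos; lra.
  - intros i Hi. apply Fpos. apply hd_k; auto. apply (reach n adj c); auto.
  - intros i Hi. apply (vertex_bound n adj c k alpha B F); auto.
Qed.

Lemma sqrt2_bounds : 1 < sqrt 2 < 3/2 /\ sqrt 2 * sqrt 2 = 2.
Proof.
  assert (H := sqrt_sqrt 2 ltac:(lra)).
  assert (H0 : 0 <= sqrt 2) by apply sqrt_pos.
  split; [split|auto]; nra.
Qed.

Lemma lam5 : 2 < 2 * sqrt 2 * cos (PI / 5) < 3.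
Proof.
  destruct sqrt2_bounds as [[H1 H2] H3].
  assert (Hc : cos (PI/4) < cos (PI/5)).
  { pose proof PI_RGT_0. apply cos_decreasing_1; try lra.
  }
  rewrite cos_PI4 in Hc.
  assert (1 / sqrt 2 = sqrt 2 / 2) by (field_simplify_eq; [simpl; lra|lra]).
  pose proof (COS_bound (PI/5)).
  split; nra.
Qed.

Lemma lam7 : 1 + sqrt 2 < 2 * sqrt 2 * cos (PI / 7) < 3.
Proof.
  destruct sqrt2_bounds as [[H1 H2] H3].
  assert (Hc : cos (PI/6) < cos (PI/7)).
  { pose proof PI_RGT_0. apply cos_decreasing_1; try lra.
  }
  rewrite cos_PI6 in Hc.
  assert (H4 := sqrt_sqrt 3 ltac:(lra)).
  assert (H5 : 0 <= sqrt 3) by apply sqrt_pos.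
  assert (H6 : sqrt 2 * sqrt 3 > 1 + sqrt 2).
  { assert (0 < sqrt 2 * sqrt 3) by nra.
    assert ((sqrt 2 * sqrt 3) * (sqrt 2 * sqrt 3) = 6) by (replace ((sqrt 2 * sqrt 3) * (sqrt 2 * sqrt 3)) with ((sqrt 2 * sqrt 2) * (sqrt 3 * sqrt 3)) by ring; rewrite H3, H4; ring).
    nra. }
  pose proof (COS_bound (PI/7)).
  split; nra.
Qed.

Lemma k2_numeric alpha delta0 lam :
  2 < lam < 3 -> 0 < alpha < 1 -> is_rho 2 (Wmat delta0) lam ->
  alpha > - delta0 / (2 - delta0) ->
  exists F : nat -> R,
   (forall i j, (i <= j)%nat -> F j <= F i) /\ (forall i, (i <= 2-1)%nat -> 0 < F i) /\
   3*alpha*F 0%nat + (1-alpha)*(2*F 0%nat + F 1%nat) < (3*alpha + (1-alpha)*lam) * F 0%nat /\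
   alpha*F (2-1)%nat + (1-alpha)*F (2-2)%nat < (3*alpha + (1-alpha)*lam) * F (2-1)%nat.
Proof.
  intros Hl Ha [[x [[i0 [Hi0 Hx0]] Hx]] _] Hd.
  assert (e0 := Hx 0%nat ltac:(lia)). assert (e1 := Hx 1%nat ltac:(lia)).
  unfold rsum in e0, e1. simpl in e0, e1.
  assert (Hx1 : x 1%nat <> 0).
  { intro H. rewrite H in e1. assert (x 0%nat = 0) by lra.
    destruct i0 as [|[|i0]]; [congruence|congruence|lia]. }
  assert (Hx0e : x 0%nat = (lam - 2) * x 1%nat) by lra.
  rewrite Hx0e in e0.
  assert (Hrel : delta0 * (lam - 2) + 1 = lam * (lam - 2)).
  { apply (Rmult_eq_reg_r (x 1%nat)); auto. lra. }
  assert (Hdl : delta0 < 2) by nra.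
  assert (Hkey : 0 < 2 * alpha + (1 - alpha) * delta0).
  { assert (H2 : - delta0 / (2 - delta0) * (2 - delta0) < alpha * (2 - delta0))
      by (apply Rmult_lt_compat_r; lra).
    unfold Rdiv in H2. rewrite Rmult_assoc, Rinv_l in H2 by lra. lra. }
  set (b := 1 - alpha) in *.
  set (W := 2 * alpha + b * lam).
  assert (HW : 0 < W) by (unfold W, b; nra).
  set (q := b / W).
  assert (Hq : q * W = b) by (unfold q; field; lra).
  assert (Hq0 : 0 < q) by (unfold q; apply Rdiv_lt_0_compat; unfold b; lra).
  assert (Hql : q < lam - 2).
  { assert (b < (lam - 2) * W).
    { assert (0 < (lam - 2) * (2 * alpha + b * delta0)) by (apply Rmult_lt_0_compat; lra).
      assert (E : (lam-2)*W - b - (lam - 2) * (2 * alpha + b * delta0) = b * (lam*(lam-2) - (delta0 * (lam - 2) + 1)))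
        by (unfold W; ring).
      rewrite Hrel in E. lra. }
    nra. }
  set (f := (q + (lam - 2)) / 2).
  exists (fun i => match i with 0%nat => 1 | 1%nat => f | _ => 0 end).
  repeat split.
  - intros i j Hij. destruct i as [|[|i]]; destruct j as [|[|j]]; unfold f; try lra; lia.
  - intros i Hi. destruct i as [|[|i]]; unfold f; try lra; simpl in Hi; lia.
  - simpl. unfold f. assert (0 < b) by (unfold b; lra). nra.
  - simpl. assert (b < W * f) by (unfold f; nra). unfold W in *. lra.
Qed.

Lemma k3_numeric alpha gamma0 lam :
  1 + sqrt 2 < lam < 3 -> 0 < alpha < 1 -> is_rho 3 (Zmat gamma0) lam ->
  alpha > - gamma0 / (2 - gamma0) ->
  exists F : nat -> R,
   (forall i j, (i <= j)%nat -> F j <= F i) /\ (forall i, (i <= 3-1)%nat -> 0 < F i) /\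
   3*alpha*F 0%nat + (1-alpha)*(2*F 0%nat + F 1%nat) < (3*alpha + (1-alpha)*lam) * F 0%nat /\
   (forall d, (1 <= d)%nat -> (d + 1 < 3)%nat ->
    3*alpha*F d + (1-alpha)*(F (d-1)%nat + 2*F (d+1)%nat) < (3*alpha + (1-alpha)*lam) * F d) /\
   alpha*F (3-1)%nat + (1-alpha)*F (3-2)%nat < (3*alpha + (1-alpha)*lam) * F (3-1)%nat.
Proof.
  intros Hl Ha [[x [[i0 [Hi0 Hx0]] Hx]] _] Hg.
  destruct sqrt2_bounds as [[Hs1 Hs2] Hss].
  set (s := sqrt 2) in *.
  assert (e0 := Hx 0%nat ltac:(lia)). assert (e1 := Hx 1%nat ltac:(lia)). assert (e2 := Hx 2%nat ltac:(lia)).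
  unfold rsum in e0, e1, e2. simpl in e0, e1, e2. fold s in e0, e1.
  set (P := lam * (lam - 2) - 1).
  assert (HP : 0 < P) by (unfold P; nra).
  assert (HP2 : P < 2) by (unfold P; nra).
  assert (Hx1e : x 1%nat = (lam - 2) * x 2%nat) by lra.
  assert (Hsx0 : s * x 0%nat = P * x 2%nat) by (unfold P; rewrite Hx1e in e1; lra).
  assert (Hx2 : x 2%nat <> 0).
  { intro H. rewrite H in Hx1e, Hsx0. assert (x 1%nat = 0) by lra.
    assert (x 0%nat = 0) by (assert (s * x 0%nat = 0) by lra; apply Rmult_integral in H1 as [|]; lra).
    destruct i0 as [|[|[|i0]]]; [congruence|congruence|congruence|lia]. }
  assert (E : gamma0 * (s * x 0%nat) + (s * s) * x 1%nat = lam * (s * x 0%nat)).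
  { replace (gamma0 * (s * x 0%nat) + (s * s) * x 1%nat) with (s * (gamma0 * x 0%nat + (s * x 1%nat + (0 * x 2%nat + 0)))) by ring.
    rewrite e0. ring. }
  rewrite Hsx0, Hss, Hx1e in E.
  assert (Hrel : gamma0 * P + 2 * (lam - 2) = lam * P).
  { apply (Rmult_eq_reg_r (x 2%nat)); auto. lra. }
  assert (Hg2 : gamma0 < 2).
  { assert (E2 : (2 - gamma0) * P = (lam - 2) * (2 - P)) by lra.
    assert (0 < (lam - 2) * (2 - P)) by (apply Rmult_lt_0_compat; lra).
    nra. }
  assert (Hkey : 0 < 2 * alpha + (1 - alpha) * gamma0).
  { assert (H2 : - gamma0 / (2 - gamma0) * (2 - gamma0) < alpha * (2 - gamma0))
      by (apply Rmult_lt_compat_r; lra).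
    unfold Rdiv in H2. rewrite Rmult_assoc, Rinv_l in H2 by lra. lra. }
  set (b := 1 - alpha) in *.
  assert (Hb : 0 < b) by (unfold b; lra).
  set (W := 2 * alpha + b * lam).
  assert (HW : 0 < W) by (unfold W; nra).
  set (U := W / b).
  assert (HU : U * b = W) by (unfold U; field; lra).
  set (L := 2 * (lam - 2) / P).
  assert (HL : L * P = 2 * (lam - 2)) by (unfold L; field; lra).
  assert (HLU : L < U).
  { assert (EE : W * P - 2 * (lam - 2) * b = P * (2 * alpha + b * gamma0)).
    { unfold W. replace (2 * alpha + b * lam) with (2 * alpha + b * lam) by auto.
      assert (b * (gamma0 * P + 2 * (lam - 2)) = b * (lam * P)) by (rewrite Hrel; auto). nra. }
    assert (0 < P * (2 * alpha + b * gamma0)) by (apply Rmult_lt_0_compat; lra).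
    assert (L * b * P < U * b * P) by (rewrite HU; nra).
    assert (L * b < U * b) by nra. nra. }
  assert (HU1 : 1 < U).
  { assert (b < U * b) by (rewrite HU; unfold W; nra). nra. }
  set (F1 := (Rmax L 1 + U) / 2).
  assert (HF1a : L < F1) by (unfold F1; pose proof (Rmax_l L 1); pose proof (Rmax_r L 1); pose proof (Rmax_lub_lt L 1 U); lra).
  assert (HF1b : 1 < F1) by (unfold F1; pose proof (Rmax_l L 1); pose proof (Rmax_r L 1); lra).
  assert (HF1c : F1 < U) by (unfold F1; pose proof (Rmax_lub_lt L 1 U); lra).
  set (m := F1 / (lam - 2)).
  assert (Hm : m * (lam - 2) = F1) by (unfold m; field; lra).
  assert (Hm1 : F1 < m) by nra.
  assert (Hm2 : m < lam * F1 - 2).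
  { assert (EE : (lam - 2) * (lam * F1 - 2) - F1 = P * (F1 - L)) by (replace (P * (F1 - L)) with (P * F1 - L * P) by ring; rewrite HL; unfold P; ring).
    assert (0 < P * (F1 - L)) by (apply Rmult_lt_0_compat; lra).
    nra. }
  set (F0 := (m + (lam * F1 - 2)) / 2).
  assert (HF0a : m < F0) by (unfold F0; lra).
  assert (HF0b : F0 < lam * F1 - 2) by (unfold F0; lra).
  exists (fun i => match i with 0%nat => F0 | 1%nat => F1 | 2%nat => 1 | _ => 0 end).
  repeat split.
  - intros i j Hij. destruct i as [|[|[|i]]]; destruct j as [|[|[|j]]]; try lra; lia.
  - intros i Hi. destruct i as [|[|[|i]]]; try lra; simpl in Hi; lia.
  - simpl. assert (F1 < (lam - 2) * F0) by nra. nra.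
  - intros d Hd1 Hd2. destruct d as [|[|d]]; try lia. simpl. nra.
  - simpl. assert (b * F1 < W) by (rewrite <- HU; nra). unfold W in *. lra.
Qed.

Theorem mainTheorem12 (n : nat) (adj : nat -> nat -> bool) (alpha gamma0 delta0 : R)
  (k : nat) :
  simple_graph n adj ->
  unicyclic n adj ->
  max_degree n adj 3 ->
  0 < alpha < 1 ->
  is_rho 3 (Zmat gamma0) (2 * sqrt 2 * cos (PI / 7)) ->
  is_rho 2 (Wmat delta0) (2 * sqrt 2 * cos (PI / 5)) ->
  k_of adj k ->
  ((k = 3%nat /\ alpha > - gamma0 / (2 - gamma0)) \/
   (k = 2%nat /\ alpha > - delta0 / (2 - delta0))) ->
  forall r, is_rho n (A_alpha n adj alpha) r ->
    r < 3 * alpha + 2 * (1 - alpha) * sqrt 2 * cos (PI / (2 * INR k + 1)).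
Proof.
  intros Hg [Hcon [c0 [Hc0 U0]]] Hmax Ha HZ HW [c [Hc Hk]] Hcase r [Hr _].
  assert (U : uniq_cyc adj c) by (intros c' Hc' x y; rewrite (U0 c' Hc'), (U0 c Hc); auto).
  destruct Hcase as [[-> Hal]|[-> Hal]].
  - replace (2 * INR 3 + 1) with 7 by (simpl; lra).
    replace (3 * alpha + 2 * (1 - alpha) * sqrt 2 * cos (PI / 7))
      with (3 * alpha + (1 - alpha) * (2 * sqrt 2 * cos (PI / 7))) by ring.
    destruct (k3_numeric alpha gamma0 _ lam7 Ha HZ Hal) as [F [Fdec [Fpos [P0 [Pmid Plast]]]]].
    eapply (graph_bound n adj c 3 alpha _ F); eauto.
  - replace (2 * INR 2 + 1) with 5 by (simpl; lra).
    replace (3 * alpha + 2 * (1 - alpha) * sqrt 2 * cos (PI / 5))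
      with (3 * alpha + (1 - alpha) * (2 * sqrt 2 * cos (PI / 5))) by ring.
    destruct (k2_numeric alpha delta0 _ lam5 Ha HW Hal) as [F [Fdec [Fpos [P0 Plast]]]].
    eapply (graph_bound n adj c 2 alpha _ F); eauto.
    intros d Hd1 Hd2; lia.
Qed.
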